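(* Fix an integer $\Delta\geq 3$. There is a function $\varepsilon:\mathbb{N}\to\mathbb{R}$, depending only on $n$ (for the fixed $\Delta$), with $\varepsilon(n)\to 0$ as $n\to\infty$, such that for every integer $n\geq 2$ and every rooted tree $T$ of order $n$ and maximum degree at most $\Delta$, $$\sum_{u\in V(T)}\min\left\{d(u),n^{\downarrow}(u)\right\}\geq (1-\varepsilon(n))\frac{\Delta-2}{(\Delta-1)^2}\,n\log_{(\Delta-1)}\left(\log_{(\Delta-1)}(n)\right).$$
   Context: For a vertex $u$ of a rooted tree $T$, $d(u)$ denotes the depth of $u$ (its distance to the root) and $n^{\downarrow}(u)$ denotes the number of vertices of $T$ that are equal to $u$ or are descendants of $u$. The $o(1)$ term of the paper is written here as $\varepsilon(n)$. *)

(* Defs.v *)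
From Stdlib Require Import Reals Lra Lia List Arith.
Import ListNotations.

(* A rooted tree: a root together with the (finite) list of subtrees rooted
   at its children.  The order of children is irrelevant for everything below. *)
Inductive rtree : Type := Node : list rtree -> rtree.

Definition children (t : rtree) : list rtree := match t with Node ts => ts end.

(* order = number of vertices; for the subtree rooted at u this is n^down(u) *)
Fixpoint tsize (t : rtree) : nat :=
  match t with
  | Node ts => S ((fix sz (l : list rtree) : nat :=
                     match l with nil => 0 | c :: l' => tsize c + sz l' end) ts)
  end.

Fixpoint all_children_le (k : nat) (t : rtree) : Prop :=
  match t with
  | Node ts => (length ts <= k)%nat /\
      (fix al (l : list rtree) : Prop :=
         match l with nil => True | c :: l' => all_children_le k c /\ al l' end) ts
  end.

(* Maximum degree at most D: the root has degree = #children <= D, every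
   non-root vertex has degree = #children + 1 <= D. *)
Definition max_deg_le (D : nat) (t : rtree) : Prop :=
  (length (children t) <= D)%nat /\
  Forall (all_children_le (D - 1)) (children t).

(* sum over vertices u of the subtree t (whose root has depth d) of
   min { depth(u), n^down(u) } *)
Fixpoint cost_from (d : nat) (t : rtree) : nat :=
  match t with
  | Node ts => Nat.min d (tsize t) +
      (fix cs (l : list rtree) : nat :=
         match l with nil => 0 | c :: l' => cost_from (S d) c + cs l' end) ts
  end.

Definition min_depth_size_sum (t : rtree) : nat := cost_from 0 t.

Definition logb (b x : R) : R := ln x / ln b.

(* Main.v *)
Require Import Defs.
From Stdlib Require Import Reals Lra Lia List Arith.
Import ListNotations.

Section TreeInd.
Variable P : rtree -> Prop.
Hypothesis HP : forall ts, Forall P ts -> P (Node ts).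
Fixpoint rtree_ind' (t : rtree) : P t :=
  match t with
  | Node ts => HP ts ((fix go (l : list rtree) : Forall P l :=
      match l with nil => Forall_nil P | c :: l' => Forall_cons c (rtree_ind' c) (go l') end) ts)
  end.
End TreeInd.

Lemma tsize_node ts : tsize (Node ts) = S (list_sum (map tsize ts)).
Proof. simpl. f_equal. induction ts as [|a ts IH]; simpl; [reflexivity| now rewrite IH]. Qed.

Lemma cost_node d ts : cost_from d (Node ts) =
  Nat.min d (tsize (Node ts)) + list_sum (map (cost_from (S d)) ts).
Proof. cbn [cost_from]. f_equal. induction ts as [|a ts IH]; simpl; [reflexivity| now rewrite IH]. Qed.

Lemma acl_node k ts : all_children_le k (Node ts) <-> (length ts <= k)%nat /\ Forall (all_children_le k) ts.
Proof. cbn [all_children_le]. split; intros [H1 H2]; split; auto.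
 - clear H1. induction ts; constructor; destruct H2; auto.
 - clear H1. induction ts as [|a ts IH]; [exact I|]. inversion H2; subst. split; [assumption| exact (IH H3)].
Qed.

Fixpoint vsum (f : nat -> nat -> nat) (d : nat) (t : rtree) : nat :=
  match t with Node ts => f d (tsize t) + list_sum (map (vsum f (S d)) ts) end.

Lemma vsum_node f d ts : vsum f d (Node ts) = f d (tsize (Node ts)) + list_sum (map (vsum f (S d)) ts).
Proof. reflexivity. Qed.

Lemma list_sum_le {A} (g h : A -> nat) l : Forall (fun x => g x <= h x)%nat l ->
  (list_sum (map g l) <= list_sum (map h l))%nat.
Proof. induction 1; simpl; lia. Qed.

Lemma list_sum_eq {A} (g h : A -> nat) l : Forall (fun x => g x = h x) l ->
  list_sum (map g l) = list_sum (map h l).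
Proof. induction 1; simpl; lia. Qed.

Lemma list_sum_add {A} (g h : A -> nat) l :
  list_sum (map (fun x => g x + h x) l) = (list_sum (map g l) + list_sum (map h l))%nat.
Proof. induction l; simpl; lia. Qed.

Lemma list_sum_affine {A} (g h : A -> nat) a b l : Forall (fun x => g x <= a + b * h x)%nat l ->
  (list_sum (map g l) <= length l * a + b * list_sum (map h l))%nat.
Proof. induction 1; simpl; nia. Qed.

Lemma list_sum_bound {A} (g : A -> nat) a l : Forall (fun x => g x <= a)%nat l ->
  (list_sum (map g l) <= length l * a)%nat.
Proof. induction 1; simpl; nia. Qed.

Lemma vsum_le f g : (forall d s, f d s <= g d s)%nat -> forall t d, (vsum f d t <= vsum g d t)%nat.
Proof.
  intros H t. induction t as [ts IH] using rtree_ind'. intros d. rewrite !vsum_node.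
  apply Nat.add_le_mono; auto. apply list_sum_le. eapply Forall_impl; [|exact IH]. simpl; auto.
Qed.

Lemma vsum_add f g t d : vsum (fun d s => f d s + g d s)%nat d t = (vsum f d t + vsum g d t)%nat.
Proof.
  revert d. induction t as [ts IH] using rtree_ind'. intros d. rewrite !vsum_node.
  rewrite (list_sum_eq _ (fun x => vsum f (S d) x + vsum g (S d) x)%nat).
  - rewrite list_sum_add. lia.
  - eapply Forall_impl; [|exact IH]. simpl; auto.
Qed.

Lemma vsum_ext f g : (forall d s, f d s = g d s) -> forall t d, vsum f d t = vsum g d t.
Proof. intros H t d. apply Nat.le_antisymm; apply vsum_le; intros; rewrite H; lia. Qed.

Lemma cost_vsum t d : cost_from d t = vsum (fun d s => Nat.min d s) d t.
Proof.
  revert d. induction t as [ts IH] using rtree_ind'. intros d. rewrite cost_node, vsum_node.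
  f_equal. apply list_sum_eq. eapply Forall_impl; [|exact IH]. simpl; auto.
Qed.

Definition ind (b : bool) : nat := if b then 1%nat else 0%nat.
Definition cnt j := vsum (fun d s => ind ((j <=? d) && (j <=? s))).
Definition hv j := vsum (fun _ s => ind (j <=? s)).
Definition sh j := vsum (fun d _ => ind (d <? j)).

Fixpoint sumcnt (J d : nat) (t : rtree) : nat :=
  match J with O => O | S J' => (sumcnt J' d t + cnt (S J') d t)%nat end.

Lemma sumcnt_vsum J t d : sumcnt J d t = vsum (fun d s => Nat.min J (Nat.min d s)) d t.
Proof.
  induction J; [simpl|cbn [sumcnt]].
  - symmetry. apply Nat.le_0_r. apply (Nat.le_trans _ (vsum (fun _ _ => 0%nat) d t)).
    apply vsum_le; intros; simpl; lia. clear. revert d. induction t as [ts IH] using rtree_ind'.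
    intros d; rewrite vsum_node. simpl. apply Nat.le_0_r.
    induction ts; simpl; auto. inversion IH; subst. specialize (H1 (S d)). specialize (IHts H2). lia.
  - rewrite IHJ. unfold cnt. rewrite <- vsum_add. apply vsum_ext. intros d' s.
    unfold ind. destruct (S J <=? d') eqn:E1; destruct (S J <=? s) eqn:E2; cbn [andb];
    first [apply Nat.leb_le in E1 | apply Nat.leb_gt in E1]; first [apply Nat.leb_le in E2 | apply Nat.leb_gt in E2]; lia.
Qed.

Lemma cost_ge_sumcnt J t : (sumcnt J 0 t <= min_depth_size_sum t)%nat.
Proof.
  unfold min_depth_size_sum. rewrite cost_vsum, sumcnt_vsum. apply vsum_le. intros; lia.
Qed.

Lemma cnt_sh_hv j t d : (hv j d t <= cnt j d t + sh j d t)%nat.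
Proof.
  unfold hv, cnt, sh. rewrite <- vsum_add. apply vsum_le. intros d' s. unfold ind.
  destruct (j <=? d') eqn:E1; destruct (j <=? s) eqn:E2; destruct (d' <? j) eqn:E3; simpl;
  try lia.
  apply Nat.leb_gt in E1; apply Nat.ltb_ge in E3; lia.
Qed.

Lemma Forall_mp {A} (P Q : A -> Prop) l : Forall (fun x => P x -> Q x) l -> Forall P l -> Forall Q l.
Proof. induction 1; intros H'; inversion H'; subst; constructor; auto. Qed.

Lemma acl_mono k k' t : (k <= k')%nat -> all_children_le k t -> all_children_le k' t.
Proof.
  intros Hk. induction t as [ts IH] using rtree_ind'. rewrite !acl_node. intros [H1 H2]. split; [lia|].
  exact (Forall_mp _ _ _ IH H2).
Qed.

Lemma heavy m t : all_children_le m t -> forall j d, (1 <= j)%nat ->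
  (tsize t <= (j-1) + (1 + m*(j-1)) * hv j d t)%nat.
Proof.
  induction t as [ts IH] using rtree_ind'. intros Hm j d Hj.
  rewrite acl_node in Hm. destruct Hm as [Hl Hf].
  unfold hv. rewrite vsum_node. fold (hv j).
  destruct (j <=? tsize (Node ts)) eqn:E; [apply Nat.leb_le in E | apply Nat.leb_gt in E; idtac].
  2: { apply Nat.le_trans with (j-1)%nat; [lia| apply Nat.le_add_r]. }
  unfold ind.
  assert (Hs : (list_sum (map tsize ts) <= length ts * (j-1) + (1 + m*(j-1)) * list_sum (map (hv j (S d)) ts))%nat).
  { apply list_sum_affine. apply (Forall_mp _ _ _ IH) in Hf. eapply Forall_impl; [|exact Hf]. simpl. auto. }
  rewrite tsize_node. cbn [ind]. assert (length ts * (j-1) <= m*(j-1))%nat by (apply Nat.mul_le_mono_r; lia).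
  set (A := (1 + m*(j-1))%nat) in *. set (HH := list_sum (map (hv j (S d)) ts)) in *. nia.
Qed.

Lemma root_heavy m T j : (1 <= m)%nat -> max_deg_le (S m) T -> (1 <= j)%nat ->
  (tsize T <= S m * j + m * j * hv j 0 T)%nat.
Proof.
  destruct T as [ts]. intros Hm1 [Hl Hf] Hj. simpl in Hl, Hf. rewrite ?Nat.sub_0_r in Hf.
  unfold hv. rewrite vsum_node. fold (hv j).
  assert (Hs : (list_sum (map tsize ts) <= length ts * (j-1) + (1 + m*(j-1)) * list_sum (map (hv j 1) ts))%nat).
  { apply list_sum_affine. eapply Forall_impl; [|exact Hf]. intros a Ha. apply heavy; auto. }
  rewrite tsize_node. assert (length ts * (j-1) <= S m*(j-1))%nat by (apply Nat.mul_le_mono_r; lia).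
  set (A := (1 + m*(j-1))%nat) in *. set (HH := list_sum (map (hv j 1) ts)) in *.
  assert (HH <= ind (j <=? S (list_sum (map tsize ts))) + HH)%nat by lia.
  assert (A <= m * j)%nat by (unfold A; nia).
  assert (A * HH <= m * j * (ind (j <=? S (list_sum (map tsize ts))) + HH))%nat.
  { apply Nat.mul_le_mono; auto. }
  nia.
Qed.

Lemma shallow K t : all_children_le K t -> (1 <= K)%nat -> forall j d, (sh j d t + 1 <= (K+1)^(j-d))%nat.
Proof.
  induction t as [ts IH] using rtree_ind'. intros Hm HK j d.
  rewrite acl_node in Hm. destruct Hm as [Hl Hf].
  unfold sh. rewrite vsum_node. fold (sh j).
  assert (Hs : (list_sum (map (sh j (S d)) ts) <= length ts * ((K+1)^(j - S d) - 1))%nat).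
  { apply list_sum_bound. apply (Forall_mp _ _ _ IH) in Hf. eapply Forall_impl; [|exact Hf]. simpl.
    intros a Ha. specialize (Ha HK j (S d)). lia. }
  unfold ind. destruct (d <? j) eqn:E.
  - apply Nat.ltb_lt in E. replace (j - d)%nat with (S (j - S d)) by lia. cbn [ind]. simpl.
    assert (1 <= (K+1)^(j - S d))%nat by (apply Nat.neq_0_lt_0, Nat.pow_nonzero; lia). nia.
  - apply Nat.ltb_ge in E. replace (j - S d)%nat with 0%nat in Hs by lia. simpl in Hs. replace (j - d)%nat with 0%nat by lia. cbn [ind]. simpl. lia.
Qed.

Lemma maxdeg_acl D T : max_deg_le D T -> all_children_le D T.
Proof.
  destruct T as [ts]. intros [Hl Hf]. simpl in *. apply acl_node. split; auto.
  eapply Forall_impl; [|exact Hf]. intros. eapply acl_mono; [|eassumption]. lia.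
Qed.
Open Scope R_scope.

Fixpoint harm (J : nat) : R := match J with O => 0 | S J' => harm J' + / INR (S J') end.

Lemma cnt_real m T j : (2 <= m)%nat -> max_deg_le (S m) T -> (1 <= j)%nat ->
  INR (cnt j 0 T) >= INR (tsize T) / INR m * / INR j - INR (S m) / INR m - INR (S (S m)) ^ j.
Proof.
  intros Hm HT Hj.
  pose proof (cnt_sh_hv j T 0) as H1.
  pose proof (shallow (S m) T (maxdeg_acl _ _ HT) ltac:(lia) j 0) as H2.
  pose proof (root_heavy m T j ltac:(lia) HT Hj) as H3.
  rewrite Nat.sub_0_r in H2. replace (S m + 1)%nat with (S (S m)) in H2 by lia.
  apply le_INR in H1, H2, H3. rewrite plus_INR in H1, H2. rewrite pow_INR in H2.
  rewrite plus_INR, !mult_INR in H3.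
  assert (Hm' : 0 < INR m) by (apply lt_0_INR; lia).
  assert (Hj' : 0 < INR j) by (apply lt_0_INR; lia).
  assert (Hh : INR (tsize T) / INR m * / INR j - INR (S m) / INR m <= INR (hv j 0 T)).
  { apply (Rmult_le_reg_r (INR m * INR j)). nra.
    replace ((INR (tsize T) / INR m * / INR j - INR (S m) / INR m) * (INR m * INR j)) with
      (INR (tsize T) - INR (S m) * INR j) by (field; lra). nra. }
  simpl (INR 1) in H2. lra.
Qed.

Lemma sum_real m T J : (2 <= m)%nat -> max_deg_le (S m) T ->
  INR (sumcnt J 0 T) >= INR (tsize T) / INR m * harm J - INR (S m) * INR J / INR m - INR (S (S m)) ^ (S J).
Proof.
  intros Hm HT. assert (Hm' : 0 < INR m) by (apply lt_0_INR; lia).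
  assert (HB : 2 <= INR (S (S m))) by (apply (le_INR 2); lia).
  induction J.
  - cbn [sumcnt harm]. change (INR 0) with 0. rewrite pow_1. pose proof (pos_INR (S (S m))). apply Rle_ge. unfold Rdiv. rewrite !Rmult_0_r, Rmult_0_l. lra.
  - cbn [sumcnt harm]. rewrite plus_INR.
    pose proof (cnt_real m T (S J) Hm HT ltac:(lia)) as Hc.
    assert (Hp : INR (S (S m)) ^ (S J) >= 0) by (apply Rle_ge, pow_le; lra).
    replace (INR (S (S m)) ^ S (S J)) with (INR (S (S m)) * INR (S (S m)) ^ (S J)) by reflexivity.
    assert (HX : INR (S (S m)) * INR (S (S m)) ^ (S J) >= 2 * INR (S (S m)) ^ (S J)) by nra.
    rewrite Rmult_plus_distr_l. 
    replace (INR (S m) * INR (S J) / INR m) with (INR (S m) * INR J / INR m + INR (S m) / INR m) by (rewrite (S_INR J); field; lra).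
    lra.
Qed.

Lemma ln_le' x y : 0 < x -> x <= y -> ln x <= ln y.
Proof. intros Hx Hxy. destruct (Rle_lt_or_eq_dec _ _ Hxy) as [H|H].
  - left. apply ln_increasing; auto.
  - subst; lra. Qed.

Lemma harm_ln J : ln (INR (S J)) <= harm J.
Proof.
  induction J.
  - simpl. rewrite ln_1. lra.
  - cbn [harm]. set (x := INR (S J)) in *.
    assert (Hx : 0 < x) by (apply lt_0_INR; lia).
    replace (INR (S (S J))) with (x * (1 + / x)) by (rewrite (S_INR (S J)); fold x; field; lra).
    rewrite ln_mult; [| lra | ]. 2: { pose proof (Rinv_0_lt_compat x Hx). lra. }
    assert (ln (1 + / x) <= / x).
    { pose proof (exp_ineq1_le (/ x)) as He. pose proof (Rinv_0_lt_compat x Hx).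
      rewrite <- (ln_exp (/ x)) at 2. apply ln_le'; lra. }
    lra.
Qed.

Lemma exists_J B n : (2 <= B)%nat -> (B <= n)%nat -> exists J, (B^(J+1) <= n < B^(J+2))%nat.
Proof.
  intros HB Hn.
  assert (H : forall k, (n < B^(k+1))%nat -> exists J, (B^(J+1) <= n < B^(J+2))%nat).
  { induction k; intros Hk.
    - simpl in Hk. lia.
    - destruct (le_lt_dec (B^(k+1)) n) as [H1|H1].
      + exists k. replace (k+2)%nat with (S k + 1)%nat by lia. lia.
      + apply IHk; auto. }
  apply (H n). pose proof (Nat.pow_gt_lin_r B (n+1) ltac:(lia)). lia.
Qed.

Lemma ln_div' x y : 0 < x -> 0 < y -> ln (x / y) = ln x - ln y.
Proof. intros. unfold Rdiv. rewrite ln_mult, ln_Rinv; try lra. apply Rinv_0_lt_compat; auto. Qed.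

Lemma main_bound m : (2 <= m)%nat -> exists N0 : nat, forall n T, (N0 <= n)%nat -> tsize T = n ->
  max_deg_le (S m) T ->
  INR (min_depth_size_sum T) >=
   ((INR (S m) - 2) / (INR (S m) - 1) ^ 2) * INR n
          * logb (INR (S m) - 1) (logb (INR (S m) - 1) (INR n)).
Proof.
  intros Hm.
  set (M := INR m). assert (HM : 2 <= M) by (apply (le_INR 2); lia).
  set (B := INR (S (S m))). assert (HBM : B = M + 2) by (unfold B, M; rewrite !S_INR; ring).
  set (lm := ln M).
  assert (Hlm : 0 < lm). { unfold lm. rewrite <- ln_1. apply ln_increasing; lra. }
  assert (Hlm2 : 1 - / M < lm).
  { pose proof (exp_ineq1 (- lm) ltac:(lra)) as He. rewrite exp_Ropp in He. unfold lm in He.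
    rewrite exp_ln in He by lra. unfold lm. lra. }
  set (beta := (M - 1) / (M^2 * lm)).
  set (alpha := / M - beta).
  assert (Halpha : 0 < alpha).
  { unfold alpha, beta. assert (0 < M) by lra.
    assert (/ M - (M - 1) / (M ^ 2 * lm) = (M * lm - (M - 1)) / (M^2 * lm)) by (field; lra).
    rewrite H0. apply Rdiv_lt_0_compat; [| apply Rmult_lt_0_compat; nra].
    assert (M * (1 - / M) = M - 1) by (field; lra). nra. }
  set (lB := ln B). assert (HlB : 0 < lB). { unfold lB. rewrite <- ln_1. apply ln_increasing; lra. }
  set (c1 := ln (2 * lB)). set (c2 := ln lm).
  set (K := (c1 / M + 3 - beta * c2) / alpha).
  destruct (INR_unbounded (exp (exp K))) as [N1 HN1].
  exists (Nat.max N1 (S (S m))). intros n T Hn HTn HT.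
  assert (HnB : (S (S m) <= n)%nat) by lia.
  assert (Hn1 : exp (exp K) < INR n). { apply (Rlt_le_trans _ (INR N1)); [lra|apply le_INR; lia]. }
  destruct (exists_J (S (S m)) n ltac:(lia) HnB) as [J [HJ1 HJ2]].
  set (N := INR n). assert (HN0 : 0 < N) by (pose proof (exp_pos (exp K)); unfold N; lra).
  set (L := ln N). set (LL := ln L).
  assert (HL : exp K < L). { unfold L. rewrite <- (ln_exp (exp K)). apply ln_increasing; auto. apply exp_pos. }
  assert (HL0 : 0 < L) by (pose proof (exp_pos K); lra).
  assert (HLL : K < LL). { unfold LL. rewrite <- (ln_exp K). apply ln_increasing; auto. apply exp_pos. }
  pose proof (sum_real m T J Hm HT) as Hs. rewrite HTn in Hs. fold N M B in Hs.
  pose proof (cost_ge_sumcnt J T) as Hc. apply le_INR in Hc.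
  assert (HBJ : B ^ (S J) <= N).
  { unfold B, N. rewrite <- pow_INR. apply le_INR. replace (S J) with (J+1)%nat by lia. lia. }
  assert (HJn : INR J <= N).
  { unfold N. apply le_INR. pose proof (Nat.pow_gt_lin_r (S (S m)) (J+1) ltac:(lia)). lia. }
  assert (HD : INR (S m) <= 2 * M) by (unfold M; rewrite S_INR; fold M; lra).
  assert (HDJ : INR (S m) * INR J / M <= 2 * N).
  { apply (Rmult_le_reg_r M); [lra|]. unfold Rdiv. rewrite Rmult_assoc, Rinv_l, Rmult_1_r by lra.
    pose proof (pos_INR J). pose proof (pos_INR (S m)). nra. }
  pose proof (harm_ln J) as Hh.
  assert (HJL : L < INR (S (S J)) * lB).
  { unfold L, lB. rewrite <- ln_pow by lra. apply ln_increasing; auto.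
    unfold N, B. rewrite <- pow_INR. apply lt_INR. replace (S (S J)) with (J+2)%nat by lia. lia. }
  assert (HJ1L : L / (2 * lB) < INR (S J)).
  { apply (Rmult_lt_reg_r (2 * lB)); [lra|]. unfold Rdiv. rewrite Rmult_assoc, Rinv_l, Rmult_1_r by lra.
    rewrite S_INR in HJL |- *. rewrite S_INR in HJL. pose proof (pos_INR J). nra. }
  assert (HlnJ : LL - c1 < ln (INR (S J))).
  { unfold LL, c1. rewrite <- ln_div' by lra. apply ln_increasing; auto. apply Rdiv_lt_0_compat; lra. }
  assert (HT1 : (INR (S m) - 2) / (INR (S m) - 1) ^ 2 * N * logb (INR (S m) - 1) (logb (INR (S m) - 1) N)
     = N * (beta * (LL - c2))).
  { replace (INR (S m) - 1) with M by (unfold M; rewrite S_INR; ring).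
    replace (INR (S m) - 2) with (M - 1) by (unfold M; rewrite S_INR; ring).
    unfold logb. fold N L lm. rewrite ln_div' by lra. fold LL c2. unfold beta. field. lra. }
  rewrite HT1. apply Rle_ge.
  assert (Hmain : N * (beta * (LL - c2)) <= N / M * harm J - 3 * N).
  { assert (Hk : alpha * K = c1 / M + 3 - beta * c2) by (unfold K; field; lra).
    assert (harm J > LL - c1) by lra.
    assert (Hineq : beta * (LL - c2) <= harm J / M - 3).
    { assert (harm J / M >= (LL - c1) / M).
      { unfold Rdiv. apply Rle_ge, Rmult_le_compat_r; [left; apply Rinv_0_lt_compat; lra| lra]. }
      assert (alpha * K <= alpha * LL) by (apply Rmult_le_compat_l; lra).
      assert ((LL - c1) / M = LL * / M - c1 / M) by (field; lra).
      unfold alpha in *. lra. }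
    replace (N / M * harm J) with (N * (harm J / M)) by (field; lra). nra. }
  lra.
Qed.

Theorem lemma4 (D : nat) (HD : (3 <= D)%nat) :
  exists eps : nat -> R,
    Un_cv eps 0 /\
    forall (n : nat) (T : rtree),
      (2 <= n)%nat ->
      tsize T = n ->
      max_deg_le D T ->
      INR (min_depth_size_sum T) >=
        (1 - eps n) * ((INR D - 2) / (INR D - 1) ^ 2) * INR n
          * logb (INR D - 1) (logb (INR D - 1) (INR n)).
Proof.
  destruct D as [|m]; [lia|].
  destruct (main_bound m ltac:(lia)) as [N0 HN0].
  exists (fun n => if (n <? N0)%nat then 1 else 0). split.
  - intros e He. exists N0. intros n Hn. destruct (Nat.ltb_spec n N0); [lia|].
    unfold R_dist. rewrite Rminus_0_r, Rabs_R0. lra.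
  - intros n T Hn HTn HT. destruct (Nat.ltb_spec n N0).
    + rewrite Rminus_diag, !Rmult_0_l. apply Rle_ge, pos_INR.
    + rewrite Rminus_0_r, Rmult_1_l. apply (HN0 n T); auto.
Qed.
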